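(* For any model $M$ (on $n$ variables), $M_{\wedge,\to}$ is contained in $U(n)_{\wedge,\to}$. In particular, $M_{\wedge,\to}$ is a generated submodel of $U(n)$ in which every chain has at most $n$ elements, and $M_{\wedge,\to}$ (as well as $U(n)_{\wedge,\to}$) is finite.
   Context: Fix $n\ge1$ and variables $p_1,\dots,p_n$; $2^n=\{0,1\}^n$ with componentwise order. A model is $(M,\le,c)$, $(M,\le)$ a poset, $c:M\to 2^n$ order-preserving, with intuitionistic Kripke semantics ($x\models p_i$ iff $c(x)_i=1$). A p-morphism of models is an order- and colour-preserving map $f$ such that $f(x)\le y$ implies $f(x')=y$ for some $x'\ge x$. A generated submodel is an up-set with the restricted structure. A point $x$ is separated if for some variable $q$, $x\not\models q$ but all $y>x$ satisfy $q$. $M^s$ is the set of separated points of $M$ with restricted order and colouring; all chains in $M^s$ have at most $n$ elements. $U(n)$ is the $n$-universal model: the generated submodel of the canonical model of IPC on $p_1,\dots,p_n$ (prime filters of the free Heyting algebra on $p_1,\dots,p_n$ ordered by inclusion, $c(x)_i=1$ iff $p_i\in x$) consisting of points with finite up-set. For every model $N$ of finite depth there is a unique p-morphism $N\to U(n)$. For a model $M$, with $f:M^s\to U(n)$ the unique p-morphism, $M_{\wedge,\to}:=f(M^s)$, a generated submodel of $U(n)$; $U(n)_{\wedge,\to}$ is the case $M=U(n)$. *)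

(* Defs.v *)
From mathcomp Require Import ssreflect ssrfun ssrbool eqtype ssrnat fintype.
From Stdlib Require Import List FunctionalExtensionality PropExtensionality ProofIrrelevance.
Set Implicit Arguments.
Unset Strict Implicit.

(** The colour c(x) in 2^n is represented as a predicate on 'I_n
    (c(x)_i = 1 iff col x i); the componentwise order on 2^n is inclusion. *)
Record model (n : nat) := Model {
  carrier :> Type;
  le : carrier -> carrier -> Prop;
  le_refl : forall x, le x x;
  le_trans : forall x y z, le x y -> le y z -> le x z;
  le_antisym : forall x y, le x y -> le y x -> x = y;
  col : carrier -> 'I_n -> Prop;
  col_mono : forall x y i, le x y -> col x i -> col y i }.
Arguments le {n M} x y : rename.
Arguments col {n M} x i : rename.

Section Sub.
Variables (n : nat) (M : model n) (P : M -> Prop).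
Definition sub_le (x y : {x : M | P x}) : Prop := le (proj1_sig x) (proj1_sig y).
Definition sub_col (x : {x : M | P x}) (i : 'I_n) : Prop := col (proj1_sig x) i.
Lemma sub_refl x : sub_le x x. Proof. exact: le_refl. Qed.
Lemma sub_trans x y z : sub_le x y -> sub_le y z -> sub_le x z.
Proof. exact: le_trans. Qed.
Lemma sub_antisym x y : sub_le x y -> sub_le y x -> x = y.
Proof.
case: x => x Px; case: y => y Py /= H1 H2.
have E : x = y by apply: le_antisym.
subst y; by rewrite (proof_irrelevance _ Px Py).
Qed.
Lemma sub_mono x y i : sub_le x y -> sub_col x i -> sub_col y i.
Proof. exact: col_mono. Qed.
Definition submodel : model n :=
  @Model n {x : M | P x} sub_le sub_refl sub_trans sub_antisym sub_col sub_mono.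
End Sub.

Definition separated n (M : model n) (x : M) : Prop :=
  exists i : 'I_n, ~ col x i /\ (forall y : M, le x y -> y <> x -> col y i).

Definition sep_model n (M : model n) : model n := submodel (@separated n M).

Definition is_pmorphism n (M N : model n) (f : M -> N) : Prop :=
  (forall x y : M, le x y -> le (f x) (f y)) /\
  (forall (x : M) i, col (f x) i <-> col x i) /\
  (forall (x : M) (y : N), le (f x) y -> exists x' : M, le x x' /\ f x' = y).

Definition upset n (M : model n) (P : M -> Prop) : Prop :=
  forall x y : M, P x -> le x y -> P y.
Definition finite_set (T : Type) (P : T -> Prop) : Prop :=
  exists l : list T, forall x, P x -> In x l.
Definition chains_at_most n (M : model n) (P : M -> Prop) (k : nat) : Prop :=
  forall l : list M, NoDup l -> (forall x, In x l -> P x) ->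
    (forall x y, In x l -> In y l -> le x y \/ le y x) -> length l <= k.

Inductive form (n : nat) : Type :=
| FVar : 'I_n -> form n
| FBot : form n
| FAnd : form n -> form n -> form n
| FOr  : form n -> form n -> form n
| FImp : form n -> form n -> form n.
Arguments FBot {n}.

Definition FTop n : form n := FImp FBot FBot.

Inductive prov (n : nat) : form n -> Prop :=
| ax_K a b : prov (FImp a (FImp b a))
| ax_S a b c : prov (FImp (FImp a (FImp b c)) (FImp (FImp a b) (FImp a c)))
| ax_andE1 a b : prov (FImp (FAnd a b) a)
| ax_andE2 a b : prov (FImp (FAnd a b) b)
| ax_andI a b : prov (FImp a (FImp b (FAnd a b)))
| ax_orI1 a b : prov (FImp a (FOr a b))
| ax_orI2 a b : prov (FImp b (FOr a b))
| ax_orE a b c : prov (FImp (FImp a c) (FImp (FImp b c) (FImp (FOr a b) c)))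
| ax_efq a : prov (FImp FBot a)
| mp a b : prov (FImp a b) -> prov a -> prov b.

(** Prime filters of the free Heyting algebra on p_1..p_n, i.e. of the
    Lindenbaum algebra of IPC (formulas ordered by provable implication),
    represented by the (provable-equivalence closed) sets of representatives. *)
Definition prime_filter n (F : form n -> Prop) : Prop :=
  F (FTop n) /\
  (forall a b, F a -> prov (FImp a b) -> F b) /\
  (forall a b, F a -> F b -> F (FAnd a b)) /\
  ~ F FBot /\
  (forall a b, F (FOr a b) -> F a \/ F b).

Section Canon.
Variable n : nat.
Definition canon_carrier := {F : form n -> Prop | prime_filter F}.
Definition canon_le (x y : canon_carrier) : Prop :=
  forall a, proj1_sig x a -> proj1_sig y a.
Definition canon_col (x : canon_carrier) (i : 'I_n) : Prop := proj1_sig x (FVar i).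
Lemma canon_refl x : canon_le x x. Proof. by []. Qed.
Lemma canon_trans x y z : canon_le x y -> canon_le y z -> canon_le x z.
Proof. by move=> H1 H2 a /H1 /H2. Qed.
Lemma canon_antisym x y : canon_le x y -> canon_le y x -> x = y.
Proof.
case: x => F PF; case: y => G PG /= H1 H2.
have E : F = G.
  apply: functional_extensionality => a; apply: propositional_extensionality.
  by split; [apply: H1 | apply: H2].
subst G; by rewrite (proof_irrelevance _ PF PG).
Qed.
Lemma canon_mono x y i : canon_le x y -> canon_col x i -> canon_col y i.
Proof. by move=> H; apply: H. Qed.
Definition canonical_model : model n :=
  @Model n canon_carrier canon_le canon_refl canon_trans canon_antisym canon_col canon_mono.
End Canon.

Definition U (n : nat) : model n :=
  submodel (fun x : canonical_model n => finite_set (fun y : canonical_model n => le x y)).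

(** M_{wedge,->} := f(M^s) where f : M^s -> U(n) is the (unique) p-morphism. *)
Definition M_wedge_to n (M : model n) : U n -> Prop :=
  fun u => exists f : sep_model M -> U n,
    is_pmorphism f /\ exists x : sep_model M, f x = u.

Definition U_wedge_to (n : nat) : U n -> Prop := M_wedge_to (U n).

(* Main.v *)
Require Import Defs.
From mathcomp Require Import ssreflect ssrfun ssrbool eqtype ssrnat fintype.
From mathcomp Require Import choice seq.
From Stdlib Require Import List Classical ClassicalEpsilon FunctionalExtensionality PropExtensionality ProofIrrelevance Lia Wf_nat.
Set Implicit Arguments.
Unset Strict Implicit.

Section Force.
Variable n : nat.

Fixpoint force (M : model n) (x : M) (f : form n) : Prop :=
  match f with
  | FVar i => col x i
  | FBot => False
  | FAnd a b => force x a /\ force x b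
  | FOr a b => force x a \/ force x b
  | FImp a b => forall y : M, le x y -> force y a -> force y b
  end.

Lemma persist (M : model n) (f : form n) (x y : M) : le x y -> force x f -> force y f.
Proof.
elim: f x y => [i|| a IHa b IHb| a IHa b IHb| a IHa b IHb] x y Hxy /=.
- by apply: col_mono.
- by [].
- by move=> [H1 H2]; split; [apply: IHa Hxy H1| apply: IHb Hxy H2].
- by move=> [H1|H2]; [left; apply: IHa Hxy H1| right; apply: IHb Hxy H2].
- move=> H z Hyz; apply: H; exact: le_trans Hxy Hyz.
Qed.

Lemma sound (f : form n) : prov f -> forall (M : model n) (x : M), force x f.
Proof.
elim=> {f} /=.
- move=> a b M x y _ Ha z Hyz _; exact: persist Hyz Ha.
- move=> a b c M x y _ H1 z Hyz H2 w Hzw Hw.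
  have Hb : force w b by apply: H2 Hzw Hw.
  have Hyw : le y w by apply: le_trans Hyz Hzw.
  exact: (H1 w Hyw Hw w (le_refl _) Hb).
- by move=> a b M x y _ [].
- by move=> a b M x y _ [].
- move=> a b M x y _ Ha z Hyz Hb; split=> //; exact: persist Hyz Ha.
- by move=> a b M x y _ Ha; left.
- by move=> a b M x y _ Ha; right.
- move=> a b c M x y _ H1 z Hyz H2 w Hzw [Hw|Hw].
  + apply: H1 Hw; exact: le_trans Hyz Hzw.
  + exact: H2 Hw.
- by [].
- move=> a b _ IH1 _ IH2 M x; exact: (IH1 M x x (le_refl _) (IH2 M x)).
Qed.

Definition Th (M : model n) (x : M) : form n -> Prop := fun f => force x f.

Lemma Th_prime (M : model n) (x : M) : prime_filter (Th x).
Proof.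
rewrite /Th; split; [|split; [|split; [|split]]] => /=.
- by move=> y _ [].
- move=> a b Ha Hab; have := sound Hab x; move=> /= H; exact: H x (le_refl _) Ha.
- by [].
- by [].
- by [].
Qed.

Lemma force_pres (M N : model n) (f : M -> N) (P : M -> Prop) :
  (forall x y, P x -> le x y -> P y) ->
  (forall x y, le x y -> le (f x) (f y)) ->
  (forall x i, col (f x) i <-> col x i) ->
  (forall x, P x -> forall y, le (f x) y -> exists x', le x x' /\ f x' = y) ->
  forall phi x, P x -> (force (f x) phi <-> force x phi).
Proof.
move=> HP Hmon Hcol Hback phi; elim: phi => [i||a IHa b IHb|a IHa b IHb|a IHa b IHb] x Px /=.
- exact: Hcol.
- by [].
- by rewrite (IHa x Px) (IHb x Px).
- by rewrite (IHa x Px) (IHb x Px).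
- split.
  + move=> H y Hxy Hy. have Py := HP _ _ Px Hxy.
    apply/(IHb y Py); apply: H; [exact: Hmon| exact/(IHa y Py)].
  + move=> H y Hxy Hy. have [x' [Hx' Ex']] := Hback x Px y Hxy. subst y.
    have Px' := HP _ _ Px Hx'.
    apply/(IHb x' Px'); apply: H => //; exact/(IHa x' Px').
Qed.

End Force.


Section Hilb.
Variable n : nat.
Implicit Types a b c : form n.

Inductive hd (G : form n -> Prop) : form n -> Prop :=
| hd_hyp a : G a -> hd G a
| hd_ax a : prov a -> hd G a
| hd_mp a b : hd G (FImp a b) -> hd G a -> hd G b.

Definition ext (G : form n -> Prop) a : form n -> Prop := fun x => G x \/ x = a.

Lemma prov_I a : prov (FImp a a).
Proof.
apply: mp (ax_K a a).
apply: mp (ax_K a (FImp a a)).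
exact: ax_S.
Qed.

Lemma hd_mono G D f : (forall x, G x -> D x) -> hd G f -> hd D f.
Proof.
move=> H; elim=> {f}.
- move=> a Ha; apply: hd_hyp; exact: H.
- by move=> a Ha; apply: hd_ax.
- move=> a b _ H1 _ H2; exact: hd_mp H1 H2.
Qed.

Lemma deduction G a b : hd (ext G a) b -> hd G (FImp a b).
Proof.
elim=> {b}.
- move=> b [Hb| ->].
  + apply: hd_mp (hd_hyp Hb); apply: hd_ax; exact: ax_K.
  + apply: hd_ax; exact: prov_I.
- move=> b Hb; apply: hd_mp (hd_ax _ Hb); apply: hd_ax; exact: ax_K.
- move=> b c _ H1 _ H2.
  apply: hd_mp H2; apply: hd_mp H1; apply: hd_ax; exact: ax_S.
Qed.

Lemma hd_empty f : hd (fun _ => False) f -> prov f.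
Proof.
elim=> {f} //.
move=> a b _ H1 _ H2; exact: mp H1 H2.
Qed.

Lemma prov_mp a b : prov (FImp (FAnd a (FImp a b)) b).
Proof.
apply: hd_empty; apply: deduction.
have HA : hd (ext (fun _ => False) (FAnd a (FImp a b))) (FAnd a (FImp a b))
  by apply: hd_hyp; right.
apply: hd_mp (hd_mp (hd_ax _ (ax_andE1 _ _)) HA).
exact: hd_mp (hd_ax _ (ax_andE2 _ _)) HA.
Qed.

Lemma pf_mp F a b : prime_filter F -> F a -> F (FImp a b) -> F b.
Proof.
move=> [_ [Hcl [Hand _]]] Ha Hab.
exact: (Hcl _ b (Hand _ _ Ha Hab) (prov_mp a b)).
Qed.

Lemma pf_hd F f : prime_filter F -> hd F f -> F f.
Proof.
move=> HF; elim=> {f}.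
- by [].
- move=> a Ha; case: HF => [HT [Hcl _]]; apply: (Hcl _ a HT).
  apply: mp Ha; exact: ax_K.
- move=> a b _ H1 _ H2; exact: pf_mp HF H2 H1.
Qed.

Fixpoint enc (f : form n) : GenTree.tree 'I_n :=
  match f with
  | FVar i => GenTree.Leaf i
  | FBot => GenTree.Node 0 nil
  | FAnd a b => GenTree.Node 1 (enc a :: enc b :: nil)
  | FOr a b => GenTree.Node 2 (enc a :: enc b :: nil)
  | FImp a b => GenTree.Node 3 (enc a :: enc b :: nil)
  end.

Fixpoint dec (t : GenTree.tree 'I_n) : form n :=
  match t with
  | GenTree.Leaf i => FVar i
  | GenTree.Node 1 (a :: b :: nil) => FAnd (dec a) (dec b)
  | GenTree.Node 2 (a :: b :: nil) => FOr (dec a) (dec b)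
  | GenTree.Node 3 (a :: b :: nil) => FImp (dec a) (dec b)
  | _ => FBot
  end.

Lemma encK : cancel enc dec.
Proof. by elim=> //= a -> b ->. Qed.

Definition enum_f (k : nat) : form n :=
  match @unpickle (GenTree.tree 'I_n) k with Some t => dec t | None => FBot end.

Lemma enum_f_surj f : exists k, enum_f k = f.
Proof. exists (pickle (enc f)); by rewrite /enum_f pickleK encK. Qed.

Section Lind.
Variables (G0 : form n -> Prop) (b : form n).
Hypothesis Hb : ~ hd G0 b.

Fixpoint chain (k : nat) : form n -> Prop :=
  match k with
  | 0 => G0
  | S k => if excluded_middle_informative (hd (ext (chain k) (enum_f k)) b)
           then chain k else ext (chain k) (enum_f k)
  end.

Lemma chain_S k x : chain k x -> chain (S k) x.
Proof. simpl; destruct (excluded_middle_informative _) => H //; by left. Qed.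

Lemma chain_mono i j x : Peano.le i j -> chain i x -> chain j x.
Proof. move=> H; induction H as [|m _ IH] => // Hc; apply: chain_S; exact: IH Hc. Qed.

Lemma chain_nb k : ~ hd (chain k) b.
Proof.
elim: k => [|k IH] //=; destruct (excluded_middle_informative _) => //.
Qed.

Definition lim : form n -> Prop := fun x => exists k, chain k x.

Lemma lim_compact f : hd lim f -> exists k, hd (chain k) f.
Proof.
elim=> {f}.
- move=> a [k Hk]; exists k; exact: hd_hyp.
- move=> a Ha; exists 0; exact: hd_ax.
- move=> a c _ [k1 H1] _ [k2 H2]; exists (Nat.max k1 k2).
  apply: hd_mp.
  + apply: hd_mono H1 => x; apply: chain_mono; lia.
  + apply: hd_mono H2 => x; apply: chain_mono; lia.
Qed.

Lemma lim_nb : ~ hd lim b.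
Proof. by move=> /lim_compact [k Hk]; apply: (chain_nb Hk). Qed.

Lemma lim_sub k x : chain k x -> lim x.
Proof. by exists k. Qed.

Lemma lim_rej f : ~ lim f -> hd lim (FImp f b).
Proof.
move=> Hf; have [k Ek] := enum_f_surj f.
have : ~ chain (S k) f by move=> H; apply: Hf; exists (S k).
simpl; destruct (excluded_middle_informative _) as [H|H].
- move=> _; apply: deduction; apply: hd_mono H => x [Hx|Hx]; [left; exact: lim_sub Hx| right; congruence].
- by move=> H'; exfalso; apply: H'; right.
Qed.

Lemma lim_closed f : hd lim f -> lim f.
Proof.
move=> H; apply: NNPP => Hf; apply: lim_nb.
exact: hd_mp (lim_rej Hf) H.
Qed.

Lemma lim_prime : prime_filter lim.
Proof.
split; [|split; [|split; [|split]]].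
- apply: lim_closed; apply: hd_ax; exact: ax_efq.
- move=> a c Ha Hac; apply: lim_closed; exact: hd_mp (hd_ax _ Hac) (hd_hyp Ha).
- move=> a c Ha Hc; apply: lim_closed.
  exact: hd_mp (hd_mp (hd_ax _ (ax_andI a c)) (hd_hyp Ha)) (hd_hyp Hc).
- move=> H; apply: lim_nb; exact: hd_mp (hd_ax _ (ax_efq b)) (hd_hyp H).
- move=> a c H; apply: NNPP => Hn.
  have Ha : ~ lim a by move=> ?; apply: Hn; left.
  have Hc : ~ lim c by move=> ?; apply: Hn; right.
  apply: lim_nb.
  apply: hd_mp (hd_hyp H).
  apply: hd_mp (lim_rej Hc).
  apply: hd_mp (lim_rej Ha).
  apply: hd_ax; exact: ax_orE.
Qed.

End Lind.

Lemma lindenbaum G0 b : ~ hd G0 b ->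
  exists G, prime_filter G /\ (forall x, G0 x -> G x) /\ ~ G b.
Proof.
move=> Hb; exists (lim G0 b); split; [exact: lim_prime|split].
- move=> x Hx; exists 0; exact: Hx.
- move=> H; apply: (lim_nb Hb); exact: hd_hyp.
Qed.

End Hilb.


Fixpoint filt {T} (p : T -> Prop) (l : list T) : list T :=
  match l with
  | nil => nil
  | x :: l => if excluded_middle_informative (p x) then x :: filt p l else filt p l
  end.

Lemma In_filt T (p : T -> Prop) l x : In x (filt p l) <-> In x l /\ p x.
Proof.
elim: l => [|y l IH] /=; first by split=> // [[]].
destruct (excluded_middle_informative (p y)) as [H|H] => /=.
- rewrite IH; split; [move=> [<-|[]]; tauto| move=> [[<-|]]; tauto].
- rewrite IH; split; [tauto|move=> [[<-|]]; tauto].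
Qed.

Fixpoint subs {T} (l : list T) : list (list T) :=
  match l with
  | nil => nil :: nil
  | x :: l => map (cons x) (subs l) ++ subs l
  end.

Lemma filt_subs T (p : T -> Prop) l : In (filt p l) (subs l).
Proof.
elim: l => [|y l IH] /=; first by left.
destruct (excluded_middle_informative (p y)); apply/in_or_app; [left; exact: in_map| by right].
Qed.

Lemma mem_In (T : eqType) (x : T) (s : list T) : x \in s -> In x s.
Proof.
elim: s => [|y s IH] // H; have := H; rewrite inE => /orP [/eqP ->|H']; [by left| right; exact: IH].
Qed.

Lemma length_size T (s : list T) : length s = size s.
Proof. by elim: s => //= x s ->. Qed.

Definition allI n : list 'I_n := enum 'I_n.

Lemma In_allI n (i : 'I_n) : In i (allI n).
Proof. apply: mem_In; by rewrite mem_enum. Qed.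

Lemma length_allI n : length (allI n) = n.
Proof. by rewrite length_size size_enum_ord. Qed.

Section Fin.
Variable n : nat.

Fixpoint holds (c : list 'I_n) (A : list (form n -> Prop)) (f : form n) : Prop :=
  match f with
  | FVar i => In i c
  | FBot => False
  | FAnd a b => holds c A a /\ holds c A b
  | FOr a b => holds c A a \/ holds c A b
  | FImp a b => (holds c A a -> holds c A b) /\ forall t, In t A -> t a -> t b
  end.

Definition measured (N : model n) (m : N -> nat) :=
  forall x y : N, le x y -> y <> x -> (m y < m x)%coq_nat.

Lemma Lfin (K : nat) : exists L : list (form n -> Prop),
  forall (N : model n) (m : N -> nat), measured m ->
  forall x : N, (m x < K)%coq_nat -> In (Th x) L.
Proof.
elim: K => [|K [L' IH]].
- exists nil => N m _ x H; lia.
- exists (flat_map (fun c => map (holds c) (subs L')) (subs (allI n))).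
  move=> N m Hm x Hx.
  pose c := filt (col x) (allI n).
  pose A := filt (fun t => exists y, le x y /\ y <> x /\ t = Th y) L'.
  have E : Th x = holds c A.
    apply: functional_extensionality => f; apply: propositional_extensionality.
    rewrite /Th; elim: f => [i||a IHa b IHb|a IHa b IHb|a IHa b IHb] /=.
    + rewrite In_filt; split; [move=> H; split=> //; exact: In_allI| by case].
    + by [].
    + by rewrite IHa IHb.
    + by rewrite IHa IHb.
    + split.
      * move=> H; split.
        - rewrite -IHa -IHb; exact: H x (le_refl _).
        - move=> t /In_filt [_ [y [Hxy [Hyx ->]]]]; rewrite /Th; exact: H.
      * move=> [H1 H2] y Hxy.
        case: (classic (y = x)) => [->|Hyx].
        - by rewrite IHa IHb.
        - have Hy : (m y < K)%coq_nat by have := Hm _ _ Hxy Hyx; lia.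
          apply: (H2 (Th y)); apply/In_filt; split; first exact: IH Hy.
          by exists y.
  rewrite E; apply/in_flat_map; exists c; split; first exact: filt_subs.
  apply: in_map; exact: filt_subs.
Qed.

End Fin.


Lemma canon_ext n (x y : canonical_model n) : proj1_sig x = proj1_sig y -> x = y.
Proof.
case: x => x px; case: y => y py /= E; subst y; f_equal; exact: proof_irrelevance.
Qed.

Lemma U_ext n (x y : U n) : proj1_sig (proj1_sig x) = proj1_sig (proj1_sig y) -> x = y.
Proof.
case: x => x px; case: y => y py /= E; have E' := canon_ext E; subst y.
f_equal; exact: proof_irrelevance.
Qed.

Definition canon_list n (L : list (form n -> Prop)) : list (canonical_model n) :=
  flat_map (fun t => match excluded_middle_informative (prime_filter t) with
                     | left p => (exist _ t p : canonical_model n) :: nil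
                     | right _ => nil end) L.

Lemma In_canon_list n (y : canonical_model n) L : In (proj1_sig y) L -> In y (canon_list L).
Proof.
move=> H; apply/in_flat_map; exists (proj1_sig y); split=> //.
case: y H => y py /= H.
destruct (excluded_middle_informative (prime_filter y)) as [p|p]; last by [].
left; apply: canon_ext => //.
Qed.

Fixpoint bigor n (l : list (form n)) : form n :=
  match l with nil => FBot | h :: t => FOr h (bigor t) end.

Lemma force_bigor n (M : model n) (x : M) l f : In f l -> force x f -> force x (bigor l).
Proof.
elim: l => [|h l IH] //= [->|H] Hf; [by left| right; exact: IH].
Qed.

Lemma pf_bigor n (F : form n -> Prop) l : prime_filter F -> F (bigor l) -> exists f, In f l /\ F f.
Proof.
move=> HF; elim: l => [|h l IH] /=.
- by case: HF => [_ [_ [_ [H _]]]].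
- move=> H; case: HF => [_ [_ [_ [_ Hp]]]]; case: (Hp _ _ H) => [Hh|Ht].
  + by exists h; split=> //; left.
  + have [f [Hf Hf']] := IH Ht; exists f; split=> //; by right.
Qed.

Section Back.
Variables (n : nat) (N : model n) (m : N -> nat).
Hypothesis Hm : measured m.

Definition Thc (x : N) : canonical_model n := exist _ (Th x) (Th_prime x).

Lemma Thc_mono (x y : N) : le x y -> le (Thc x) (Thc y).
Proof. move=> H a /=; exact: persist H. Qed.

Lemma minimal (x : N) (G : form n -> Prop) : (forall a, Th x a -> G a) ->
  exists z, le x z /\ (forall a, Th z a -> G a) /\
    forall z', le z z' -> z' <> z -> ~ (forall a, Th z' a -> G a).
Proof.
move=> Hx.
suff H : forall k (z : N), m z = k -> le x z -> (forall a, Th z a -> G a) ->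
  exists z0, le x z0 /\ (forall a, Th z0 a -> G a) /\
    forall z', le z0 z' -> z' <> z0 -> ~ (forall a, Th z' a -> G a).
  exact: H (m x) x erefl (le_refl _) Hx.
move=> k; induction k as [k IH] using (well_founded_induction lt_wf).
move=> z Ez Hxz Hz.
case: (classic (exists z', le z z' /\ z' <> z /\ forall a, Th z' a -> G a)).
- move=> [z' [Hzz' [Hne Hz']]].
  apply: (IH (m z')) => //.
  + rewrite -Ez; exact: Hm Hzz' Hne.
  + exact: le_trans Hxz Hzz'.
- move=> Hn; exists z; split=> //; split=> // z' H1 H2 H3; apply: Hn; by exists z'.
Qed.

Lemma back (x : N) (G : canonical_model n) : le (Thc x) G -> exists z, le x z /\ Thc z = G.
Proof.
move=> HxG.
have [z0 [Hxz [Hz0 Hmax]]] := minimal (G := proj1_sig G) HxG.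
exists z0; split=> //; apply: canon_ext => /=.
apply: functional_extensionality => a; apply: propositional_extensionality; split; first exact: Hz0.
move=> Ga; apply: NNPP => Hna.
have pG := proj2_sig G.
have [L HL] := Lfin n (S (m z0)).
pose beta (t : form n -> Prop) : form n :=
  match excluded_middle_informative (exists f, t f /\ ~ proj1_sig G f) with
  | left H => proj1_sig (constructive_indefinite_description _ H)
  | right _ => FBot end.
have Hb1 : forall t, ~ proj1_sig G (beta t).
  move=> t; rewrite /beta; destruct (excluded_middle_informative _) as [H|H].
  - by case: (constructive_indefinite_description _ H) => f [].
  - by case: pG => [_ [_ [_ [H' _]]]].
have Hb2 : forall t, (exists f, t f /\ ~ proj1_sig G f) -> t (beta t).
  move=> t Ht; rewrite /beta; destruct (excluded_middle_informative _) as [H|H] => //.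
  by case: (constructive_indefinite_description _ H) => f [].
have Himp : Th z0 (FImp a (bigor (map beta L))).
  move=> w Hw Hwa.
  case: (classic (w = z0)) => [E|Hne].
  - by subst w; exfalso; apply: Hna.
  - have Hex : exists f, Th w f /\ ~ proj1_sig G f.
      apply: NNPP => Hn; apply: (Hmax w Hw Hne) => f Hf; apply: NNPP => Hgf.
      apply: Hn; by exists f.
    have Hin : In (Th w) L by apply: (HL N m Hm); have := Hm Hw Hne; lia.
    apply: (force_bigor (f := beta (Th w))); first exact: in_map.
    exact: Hb2 Hex.
have := pf_mp pG Ga (Hz0 _ Himp).
move=> /(pf_bigor pG) [f [/in_map_iff [t [<- _]] Hf]].
exact: Hb1 Hf.
Qed.

Lemma Th_fin (x : N) : finite_set (fun y : canonical_model n => le (Thc x) y).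
Proof.
have [L HL] := Lfin n (S (m x)).
exists (canon_list L) => y Hy.
have [z [Hxz <-]] := back Hy.
apply: In_canon_list => /=; apply: (HL N m Hm).
case: (classic (z = x)) => [->|Hne]; first lia.
have := Hm Hxz Hne; lia.
Qed.

Definition ThU (x : N) : U n := exist _ (Thc x) (Th_fin x).

Lemma ThU_pmorph : is_pmorphism ThU.
Proof.
split; [|split].
- move=> x y H; exact: Thc_mono.
- by [].
- move=> x y H.
  have [z [Hxz E]] := back H.
  exists z; split=> //; apply: U_ext; by rewrite /= -E.
Qed.

End Back.


Lemma truthU n (f : form n) (u : U n) : force u f <-> proj1_sig (proj1_sig u) f.
Proof.
elim: f u => [i||a IHa b IHb|a IHa b IHb|a IHa b IHb] u /=.
- by [].
- split=> // H; have := proj2_sig (proj1_sig u); case=> [_ [_ [_ [H' _]]]]; exact: H' H.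
- have [_ [Hcl [Hand _]]] := proj2_sig (proj1_sig u).
  rewrite IHa IHb; split; first by case=> ??; apply: Hand.
  by move=> H; split; [apply: Hcl H (ax_andE1 _ _)| apply: Hcl H (ax_andE2 _ _)].
- have [_ [Hcl [_ [_ Hpr]]]] := proj2_sig (proj1_sig u).
  rewrite IHa IHb; split; last exact: Hpr.
  by case=> H; [apply: Hcl H (ax_orI1 _ _)| apply: Hcl H (ax_orI2 _ _)].
- split.
  + move=> H; apply: NNPP => Hn.
    pose F := proj1_sig (proj1_sig u).
    have pF : prime_filter F := proj2_sig (proj1_sig u).
    have Hnd : ~ hd (ext F a) b.
      by move=> /deduction /(pf_hd pF).
    have [G [pG [HFG HGb]]] := lindenbaum Hnd.
    pose Gc : canonical_model n := exist _ G pG.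
    have finG : finite_set (fun y : canonical_model n => le Gc y).
      have [l Hl] := proj2_sig u.
      exists l => y Hy; apply: Hl => c Hc; apply: Hy; apply: HFG; by left.
    pose v : U n := exist _ Gc finG.
    have Huv : le u v by move=> c Hc; apply: HFG; left.
    apply: HGb; apply/(IHb v); apply: (H v Huv); apply/(IHa v) => /=; apply: HFG; by right.
  + move=> H v Huv /IHa Hva; apply/IHb.
    exact: pf_mp (proj2_sig (proj1_sig v)) Hva (Huv _ H).
Qed.

Lemma filt_len T (p q : T -> Prop) l : (forall i, q i -> p i) ->
  (length (filt q l) <= length (filt p l))%coq_nat /\
  ((exists i, In i l /\ p i /\ ~ q i) -> (length (filt q l) < length (filt p l))%coq_nat).
Proof.
move=> Hqp; elim: l => [|y l [IH1 IH2]] /=.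
- by split=> // [[i [[]]]].
- destruct (excluded_middle_informative (q y)) as [Hq|Hq];
  destruct (excluded_middle_informative (p y)) as [Hp|Hp] => /=.
  + split; first lia. move=> [i [[<-|Hi] [Hpi Hqi]]]; first by [].
    have := IH2 (ex_intro _ i (conj Hi (conj Hpi Hqi))); lia.
  + by exfalso; apply: Hp; apply: Hqp.
  + split; first lia. move=> _; lia.
  + split=> // [[i [[<-|Hi] [Hpi Hqi]]]]; first by [].
    exact: IH2 (ex_intro _ i (conj Hi (conj Hpi Hqi))).
Qed.

Lemma filt_le T (p : T -> Prop) l : (length (filt p l) <= length l)%coq_nat.
Proof.
elim: l => //= y l IH; destruct (excluded_middle_informative (p y)) => /=; lia.
Qed.

Section Sep.
Variables (n : nat) (M : model n).

Definition msep (x : sep_model M) : nat :=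
  length (filt (fun i => ~ col (proj1_sig x) i) (allI n)).

Lemma sig_neq (x y : sep_model M) : y <> x -> proj1_sig y <> proj1_sig x.
Proof.
case: x => x px; case: y => y py /= H E; subst y; apply: H; f_equal; exact: proof_irrelevance.
Qed.

Lemma msep_measured : measured msep.
Proof.
move=> x y Hxy Hne.
have [i [Hi Hup]] := proj2_sig x.
have Hcol : col (proj1_sig y) i by apply: Hup => //; exact: sig_neq.
have [_ H] := @filt_len _ (fun i => ~ col (proj1_sig x) i) (fun i => ~ col (proj1_sig y) i) (allI n)
  (fun j Hj Hx => Hj (col_mono Hxy Hx)).
apply: H; exists i; split; [exact: In_allI| split=> //].
Qed.

Lemma msep_le x : (msep x <= n)%coq_nat.
Proof. rewrite /msep; have := filt_le (fun i => ~ col (proj1_sig x) i) (allI n); rewrite length_allI; lia. Qed.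

Lemma img_sepall (f : sep_model M -> U n) (Hf : is_pmorphism f) x :
  forall v, le (f x) v -> separated v.
Proof.
case: Hf => [Hmon [Hcol Hback]] v Hv.
have [x' [Hxx' <-]] := Hback x v Hv.
have [i [Hi Hup]] := proj2_sig x'.
exists i; split; first by move=> /Hcol.
move=> w Hw Hne.
have [x'' [Hx'x'' Ew]] := Hback x' w Hw; subst w.
have Hne' : x'' <> x' by move=> E; apply: Hne; rewrite E.
apply/Hcol; apply: Hup => //; exact: sig_neq.
Qed.

End Sep.


Lemma NoDup_map_on A B (f : A -> B) l :
  (forall x y, In x l -> In y l -> f x = f y -> x = y) -> NoDup l -> NoDup (map f l).
Proof.
elim: l => [|a l IH] Hinj Hnd /=; first by constructor.
inversion Hnd; subst; constructor.
- move=> /in_map_iff [x [Ex Hx]].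
  have E : x = a by apply: Hinj => //; [right| left].
  by subst x.
- apply: IH => // x y Hx Hy; apply: Hinj; by right.
Qed.

Lemma image_theory n (M : model n) (f : sep_model M -> U n) (Hf : is_pmorphism f) x :
  proj1_sig (proj1_sig (f x)) = Th x.
Proof.
apply: functional_extensionality => a; apply: propositional_extensionality.
rewrite -truthU /Th.
case: Hf => [Hmon [Hcol Hback]].
apply: (@force_pres n _ _ f (fun _ => True)) => //.
move=> y _; exact: Hback.
Qed.

Lemma fin_all n : exists LU : list (U n), forall M : model n, forall u, M_wedge_to M u -> In u LU.
Proof.
have [L HL] := Lfin n (S n).
exists (flat_map (fun t => match excluded_middle_informative (exists u : U n, proj1_sig (proj1_sig u) = t) with
   | left H => proj1_sig (constructive_indefinite_description _ H) :: nil
   | right _ => nil end) L).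
move=> M u [f [Hf [x <-]]].
apply/in_flat_map; exists (Th x); split.
- apply: (HL _ (@msep n M)); [exact: msep_measured| have := msep_le x; lia].
- destruct (excluded_middle_informative _) as [H|H].
  + left; case: (constructive_indefinite_description _ H) => v /= Ev.
    apply: U_ext; by rewrite Ev image_theory.
  + by exfalso; apply: H; exists (f x); exact: image_theory.
Qed.

Theorem lemma3p8 (n : nat) (Hn : 1 <= n) (M : model n) :
  (forall u : U n, M_wedge_to M u -> U_wedge_to u) /\
  upset (M_wedge_to M) /\
  chains_at_most (M_wedge_to M) n /\
  finite_set (M_wedge_to M) /\
  finite_set (@U_wedge_to n).
Proof.
split; [|split; [|split; [|split]]].
- move=> u [f [Hf [x Ex]]].
  have Hsa : forall v, le u v -> separated v by rewrite -Ex; exact: img_sepall Hf x.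
  pose x' : sep_model (U n) := exist _ u (Hsa u (le_refl _)).
  exists (ThU (@msep_measured n (U n))); split; first exact: ThU_pmorph.
  exists x'; apply: U_ext => /=.
  apply: functional_extensionality => a; apply: propositional_extensionality.
  rewrite -truthU /Th; symmetry.
  refine (@force_pres n (sep_model (U n)) (U n) (@proj1_sig _ _)
     (fun x => forall v, le (proj1_sig x) v -> separated v) _ _ _ _ a x' Hsa).
  + move=> y z Hy Hyz v Hv; apply: Hy.
    have Hyz' : le (proj1_sig y) (proj1_sig z) := Hyz; exact: le_trans Hyz' Hv.
  + by [].
  + by [].
  + move=> y Hy v Hv; exists (exist _ v (Hy v Hv)); by split.
- move=> u v [f [Hf [x Ex]]] Huv; subst u.
  have [_ [_ Hback]] := Hf.
  have [x' [_ Ex']] := Hback x v Huv.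
  exists f; split=> //; by exists x'.
- move=> l Hnd Hl Hch.
  have Hsep : forall u, In u l -> separated u.
    move=> u /Hl [f [Hf [x <-]]]; exact: img_sepall Hf x (f x) (le_refl _).
  pose wit (u : U n) : 'I_n :=
    match excluded_middle_informative (separated u) with
    | left H => proj1_sig (constructive_indefinite_description _ H)
    | right _ => Ordinal Hn end.
  have Hwit : forall u, separated u -> ~ col u (wit u) /\ forall y, le u y -> y <> u -> col y (wit u).
    move=> u Hu; rewrite /wit; destruct (excluded_middle_informative _) as [H|H] => //.
    by case: (constructive_indefinite_description _ H).
  have Hnd' : NoDup (map wit l).
    apply: NoDup_map_on => // u v Hu Hv Ew.
    apply: NNPP => Hne.
    have [Hu1 Hu2] := Hwit u (Hsep u Hu).
    have [Hv1 Hv2] := Hwit v (Hsep v Hv).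
    case: (Hch u v Hu Hv) => Hle.
    + apply: Hv1; rewrite -Ew; apply: Hu2 => // E; apply: Hne; by rewrite E.
    + apply: Hu1; rewrite Ew; apply: Hv2 => // E; apply: Hne; by rewrite E.
  have := NoDup_incl_length Hnd' (l' := allI n) (fun i _ => In_allI i).
  rewrite length_map length_allI => H; by apply/leP.
- have [LU HLU] := fin_all n; exists LU; exact: HLU.
- have [LU HLU] := fin_all n; exists LU; exact: HLU.
Qed.
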